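(* For integers $k\ge1$ and $n\ge1$, let $c(k,n)$ be the minimum, over all deterministic algorithms that sort $n$ elements in the rank query model in $k$ rounds, of the maximum over inputs of the total number of queries asked. Then $$c(k,n)\ \ge\ \frac{k}{2e}\,n^{1+1/k}-kn.$$
   Context: Rank query model for sorting: there are $n$ items $x_1,\ldots,x_n$ whose ranks $\mathrm{rank}(x_1),\ldots,\mathrm{rank}(x_n)$ form an unknown permutation of $\{1,\ldots,n\}$. A query is a pair $(i,m)$ with $i,m\in\{1,\ldots,n\}$ and asks ''How is $\mathrm{rank}(x_i)$ compared to $m$?'', with answer ''$<$'', ''$=$'' or ''$>$''. Sorting means determining the rank of every item. An algorithm runs in $k$ rounds if in each of $k$ rounds it submits a set of queries chosen depending only on answers of earlier rounds, then receives all their answers. *)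

(* Defs.v *)
From mathcomp Require Import all_boot all_fingroup.
From Stdlib Require Import Reals.
Set Implicit Arguments. Unset Strict Implicit. Unset Printing Implicit Defensive.

(* Ranks are encoded 0..n-1 (rank r+1 on paper <-> r : 'I_n), and a query
   threshold m in {1..n} likewise as m-1 : 'I_n. *)

Inductive cmp := ALt | AEq | AGt.

(* A query (i, m): "how is rank(x_i) compared to m?" *)
Definition query (n : nat) := ('I_n * 'I_n)%type.

Definition answer (n : nat) (p : {perm 'I_n}) (q : query n) : cmp :=
  let r := p q.1 in
  if (r < q.2)%N then ALt else if r == q.2 then AEq else AGt.

Definition transcript_t (n : nat) := seq (query n * cmp).

Record algo (n : nat) := Algo {
  alg_round : nat -> transcript_t n -> {set query n};
  alg_out   : transcript_t n -> {perm 'I_n} }.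

Fixpoint run (n : nat) (A : algo n) (p : {perm 'I_n}) (j : nat) : transcript_t n :=
  match j with
  | 0 => [::]
  | j'.+1 => let t := run A p j' in
             t ++ [seq (q, answer p q) | q <- enum (alg_round A j' t)]
  end.

Fixpoint cost (n : nat) (A : algo n) (p : {perm 'I_n}) (j : nat) : nat :=
  match j with
  | 0 => 0
  | j'.+1 => cost A p j' + #|alg_round A j' (run A p j')|
  end.

Definition sorts_in (n : nat) (A : algo n) (k : nat) : Prop :=
  forall p : {perm 'I_n}, alg_out A (run A p k) = p.

(* Main.v *)
Set Warnings "-notation-overridden".
Require Import Defs.
From mathcomp Require Import all_boot all_fingroup.
From Stdlib Require Import Reals Lra.
From mathcomp Require Import ssreflect ssrfun ssrbool eqtype ssrnat seq fintype bigop finset.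
Set Implicit Arguments. Unset Strict Implicit. Unset Printing Implicit Defensive.

Section Tree.
Variables (X K : finType) (k : nat) (code : X -> nat -> K) (Fam : nat -> X -> {set K}).
Hypothesis Fam_agree : forall j x y, (forall l, l < j -> code x l = code y l) -> Fam j x = Fam j y.
Hypothesis code_in : forall j x, j < k -> code x j \in Fam j x.
Hypothesis code_inj : forall x y, (forall l, l < k -> code x l = code y l) -> x = y.

Lemma tree_aux t : forall j (S : {set X}) x0, j + t = k -> x0 \in S ->
  (forall x, x \in S -> forall l, l < j -> code x l = code x0 l) ->
  #|S| <= \max_(x in S) \prod_(j <= l < k) #|Fam l x|.
Proof.
elim: t => [|t IH] j S x0 Hjk Hx0 Hag.
  rewrite addn0 in Hjk; subst j.
  have H1 : #|S| <= 1.
    rewrite -(cards1 x0); apply: subset_leq_card; apply/subsetP => x Hx.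
    rewrite in_set1; apply/eqP; apply: code_inj => l Hl; exact: Hag.
  apply: (leq_trans H1); apply: (leq_trans _ (leq_bigmax_cond _ Hx0)).
  by rewrite big_geq.
have Hjk' : j < k by rewrite -Hjk addnS ltnS leq_addr.
set F := Fam j x0.
have HF : forall x, x \in S -> code x j \in F.
  move=> x Hx; rewrite /F -(Fam_agree (x := x)); first exact: code_in.
  exact: Hag.
set M := \max_(x in S) \prod_(j.+1 <= l < k) #|Fam l x|.
have Hsum : #|S| = \sum_(c in F) #|[set x in S | code x j == c]|.
  rewrite -sum1_card (partition_big (fun x => code x j) (mem F)) //=.
  apply: eq_bigr => c _; rewrite -sum1_card; apply: eq_bigl => x.
  by rewrite inE.
have Hc : forall c, #|[set x in S | code x j == c]| <= M.
  move=> c; case: (pickP (mem [set x in S | code x j == c])) => [xc Hxc|H0]; last first.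
    by rewrite (eq_card0 H0).
  have Hxc' : xc \in [set x in S | code x j == c] by [].
  apply: (leq_trans (IH j.+1 _ xc _ Hxc' _)).
  - by rewrite addSnnS.
  - move: Hxc'; rewrite inE => /andP [HxcS /eqP Hxcj].
    move=> x; rewrite inE => /andP [Hx /eqP Hxj] l; rewrite ltnS leq_eqVlt => /orP [/eqP ->|Hl].
      by rewrite Hxj Hxcj.
    by rewrite (Hag x Hx l Hl) (Hag xc HxcS l Hl).
  apply/bigmax_leqP => x; rewrite inE => /andP [Hx _].
  exact: (leq_bigmax_cond _ Hx).
have H1 : #|S| <= #|F| * M.
  rewrite Hsum; apply: (@leq_trans (\sum_(c in F) M)).
    by apply: leq_sum => c _; exact: Hc.
  by rewrite sum_nat_const.
have HS : 0 < #|S| by apply/card_gt0P; exists x0.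
have [xm Hxm HM] := eq_bigmax_cond (fun x => \prod_(j.+1 <= l < k) #|Fam l x|) HS.
apply: (leq_trans H1); apply: (leq_trans _ (leq_bigmax_cond _ Hxm)).
rewrite (big_ltn Hjk') /M HM /F (Fam_agree (y := xm)) //.
move=> l Hl; by rewrite (Hag xm Hxm l Hl).
Qed.

Lemma tree_count (x0 : X) : exists x, #|X| <= \prod_(0 <= l < k) #|Fam l x|.
Proof.
have Hx0 : x0 \in [set: X] by rewrite inE.
have := @tree_aux k 0 [set: X] x0 (add0n k) Hx0 (fun _ _ _ H => ltac:(by [])).
have HS : 0 < #|[set: X]| by apply/card_gt0P; exists x0.
have [xm Hxm HM] := eq_bigmax_cond (fun x => \prod_(0 <= l < k) #|Fam l x|) HS.
rewrite HM cardsT => H; by exists xm.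
Qed.
End Tree.
From mathcomp Require Import zify.
Set Bullet Behavior "Strict Subproofs".
Set Bullet Behavior "Strict Subproofs".

Ltac fin := rewrite -?val_eqE /=; repeat (case: ifP => ?); try done; try (exfalso; lia).

Section App.
Variables (n : nat) (A : algo n).

Definition ansr (r m : 'I_n) : cmp := if r < m then ALt else if r == m then AEq else AGt.
Definition below (Q : {set query n}) (i r : 'I_n) := #|[set q in Q | (q.1 == i) && (q.2 < r)]|.
Definition isthr (Q : {set query n}) (i r : 'I_n) := [exists q in Q, (q.1 == i) && (q.2 == r)].
Definition dcnt (Q : {set query n}) (i : 'I_n) := #|[set q in Q | q.1 == i]|.
Definition KT := {ffun 'I_n -> 'I_(n*n).+1 * bool}.
Definition Qr p l := alg_round A l (run A p l).
Definition code p l : KT := [ffun i => (inord (below (Qr p l) i (p i)), isthr (Qr p l) i (p i))].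
Definition Fam l p : {set KT} := [set f : KT | [forall i, (f i).1 <= dcnt (Qr p l) i]].

Lemma below_le Q i r : below Q i r <= n * n.
Proof.
apply: (leq_trans (max_card _)); by rewrite card_prod card_ord.
Qed.

Lemma code_ans_aux Q i (r r' : 'I_n) (q : query n) : r <= r' -> below Q i r = below Q i r' -> isthr Q i r = isthr Q i r' ->
  q \in Q -> q.1 = i -> ansr r q.2 = ansr r' q.2.
Proof.
move=> Hrr Hb Ht HQ Hq1.
have Hsub : [set q in Q | (q.1 == i) && (q.2 < r)] \subset [set q in Q | (q.1 == i) && (q.2 < r')].
  apply/subsetP => x; rewrite !inE => /andP [-> /andP [-> H]] /=.
  exact: (leq_trans H Hrr).
have Heq : [set q in Q | (q.1 == i) && (q.2 < r)] = [set q in Q | (q.1 == i) && (q.2 < r')].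
  apply/eqP; rewrite eqEcard Hsub /=; rewrite /below in Hb; by rewrite Hb.
have Hnot : forall x, x \in Q -> x.1 = i -> r <= x.2 -> x.2 < r' -> False.
  move=> x Hx Hx1 H1 H2.
  have : x \in [set q in Q | (q.1 == i) && (q.2 < r')] by rewrite !inE Hx Hx1 eqxx H2.
  rewrite -Heq !inE => /andP [_ /andP [_ H3]]. rewrite ltnNge H1 in H3; done.
rewrite /ansr.
case: (ltngtP q.2 r) => H1.
- have H2 : q.2 < r' by exact: (leq_trans H1 Hrr).
  fin.
- case: (ltngtP q.2 r') => H2.
  + by exfalso; apply: (Hnot q HQ Hq1 (ltnW H1) H2).
  + fin.
  + exfalso.
    have : isthr Q i r' by apply/existsP; exists q; rewrite HQ Hq1 eqxx /=; apply/eqP; exact: val_inj.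
    rewrite -Ht => /existsP [x /andP [Hx /andP [/eqP Hx1 /eqP Hx2]]].
    apply: (Hnot x Hx Hx1); first by rewrite Hx2.
    by rewrite Hx2 -H2.
- have Hr : r = r' :> nat.
    apply/eqP; rewrite eqn_leq Hrr /=; rewrite leqNgt; apply/negP => Hlt.
    apply: (Hnot q HQ Hq1); [by rewrite H1 | by rewrite H1].
  fin.
Qed.

Lemma code_ans Q i (r r' : 'I_n) (q : query n) : below Q i r = below Q i r' -> isthr Q i r = isthr Q i r' ->
  q \in Q -> q.1 = i -> ansr r q.2 = ansr r' q.2.
Proof.
case: (leqP r r') => H Hb Ht HQ Hq.
  exact: (@code_ans_aux Q i r r' q H Hb Ht HQ Hq).
symmetry; exact: (@code_ans_aux Q i r' r q (ltnW H) (esym Hb) (esym Ht) HQ Hq).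
Qed.

Lemma run_agree j p p' : (forall l, l < j -> code p l = code p' l) -> run A p j = run A p' j.
Proof.
elim: j => [|j IH] H //=.
have Hr : run A p j = run A p' j by apply: IH => l Hl; apply: H; exact: ltnW.
have Hc := H j (ltnSn j).
rewrite -Hr; congr (_ ++ _); apply/eq_in_map => q; rewrite mem_enum => Hq.
congr (q, _).
have := congr1 (fun f : KT => f q.1) Hc; rewrite !ffunE /Qr -Hr => [[Hi Ht]].
have Hb : below (alg_round A j (run A p j)) q.1 (p q.1) = below (alg_round A j (run A p j)) q.1 (p' q.1).
  have := congr1 (@nat_of_ord _) Hi; rewrite !inordK //; rewrite ltnS; exact: below_le.
change (ansr (p q.1) q.2 = ansr (p' q.1) q.2); exact: (@code_ans _ q.1 (p q.1) (p' q.1) q Hb Ht Hq (erefl _)).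
Qed.

Lemma Fam_agree j p p' : (forall l, l < j -> code p l = code p' l) -> Fam j p = Fam j p'.
Proof. by move=> H; rewrite /Fam /Qr (@run_agree j p p' H). Qed.

Lemma code_in j p : code p j \in Fam j p.
Proof.
rewrite inE; apply/forallP => i; rewrite ffunE /= inordK; last by rewrite ltnS below_le.
apply: subset_leq_card; apply/subsetP => q; rewrite !inE => /andP [-> /andP [-> _]] //.
Qed.

Lemma code_inj k : sorts_in A k -> forall p p', (forall l, l < k -> code p l = code p' l) -> p = p'.
Proof. by move=> HA p p' H; rewrite -(HA p) -(HA p') (@run_agree k p p' H). Qed.

Lemma card_le_pred (M d : nat) : #|[pred y : 'I_M.+1 * bool | y.1 <= d]| <= 2 * d + 2.
Proof.
have H1 : #|[set a : 'I_M.+1 | a <= d]| <= d.+1.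
  apply: (@leq_trans #|[set (inord (val j) : 'I_M.+1) | j : 'I_d.+1]|).
    apply: subset_leq_card; apply/subsetP => a; rewrite inE => Ha.
    apply/imsetP; exists (@Ordinal d.+1 a Ha) => //.
    by rewrite /= inord_val.
  by apply: (leq_trans (leq_imset_card _ _)); rewrite card_ord.
apply: (@leq_trans #|setX [set a : 'I_M.+1 | a <= d] [set: bool]|).
  apply: subset_leq_card; apply/subsetP => y; rewrite !inE /= => ->; by [].
rewrite cardsX cardsT card_bool.
have -> : 2 * d + 2 = d.+1 * 2 by lia.
by rewrite leq_mul2r H1 orbT.
Qed.

Lemma foldr_prod_le (T : eqType) (s : seq T) (f g : T -> nat) : (forall x, f x <= g x) ->
  foldr muln 1 [seq f x | x <- s] <= \prod_(x <- s) g x.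
Proof.
move=> H; elim: s => [|x s IH] /=; first by rewrite big_nil.
by rewrite big_cons leq_mul.
Qed.

Lemma card_Fam l p : #|Fam l p| <= \prod_(i <- enum 'I_n) (2 * dcnt (Qr p l) i + 2).
Proof.
pose F := fun i : 'I_n => [pred y : 'I_(n*n).+1 * bool | y.1 <= dcnt (Qr p l) i].
have -> : #|Fam l p| = #|(finfun.family F : simpl_pred KT)|.
  apply: eq_card => f; rewrite inE; apply/forallP/familyP => H i; have := H i; by rewrite inE.
rewrite card_family /image_mem.
apply: foldr_prod_le => i; exact: card_le_pred.
Qed.

Lemma card_split (Q : {set query n}) : #|Q| = \sum_(i <- enum 'I_n) dcnt Q i.
Proof.
rewrite -sum1_card (partition_big (fun q : query n => q.1) predT) //= big_enum /=.
apply: eq_bigr => i _; rewrite /dcnt -sum1_card; apply: eq_bigl => q; by rewrite inE.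
Qed.

Lemma cost_sum p k : cost A p k = \sum_(0 <= l < k) #|Qr p l|.
Proof.
elim: k => [|k IH] /=; first by rewrite big_geq.
by rewrite big_nat_recr //= IH.
Qed.

End App.

Lemma pow_exp (x : R) (m : nat) : (exp x ^ m = exp (INR m * x))%R.
Proof.
elim: m => [|m IH]; first by rewrite /= Rmult_0_l exp_0.
rewrite -tech_pow_Rmult IH S_INR -exp_plus; congr exp; ring.

Qed.

Definition Bd (lam : R) (x a s : nat) : Prop :=
  (INR x <= lam ^ a * exp (INR s / lam - INR a))%R.

Lemma Bd_mono lam x y a s : x <= y -> Bd lam y a s -> Bd lam x a s.
Proof. move=> H; apply: Rle_trans; apply: le_INR; exact/leP. Qed.

Lemma Bd_one lam : Bd lam 1 0 0.
Proof. rewrite /Bd /= Rdiv_0_l Rminus_0_r exp_0; lra. Qed.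

Lemma Bd_mul lam x y a b s t : (0 < lam)%R -> Bd lam x a s -> Bd lam y b t -> Bd lam (x * y) (a + b) (s + t).
Proof.
rewrite /Bd => Hl H1 H2.
have -> : (lam ^ (a + b) * exp (INR (s + t) / lam - INR (a + b)) =
   (lam ^ a * exp (INR s / lam - INR a)) * (lam ^ b * exp (INR t / lam - INR b)))%R.
  rewrite pow_add !plus_INR.
  have -> : ((INR s + INR t) / lam - (INR a + INR b) = (INR s / lam - INR a) + (INR t / lam - INR b))%R by field; lra.
  rewrite exp_plus; ring.
rewrite mult_INR; apply: Rmult_le_compat => //; exact: pos_INR.
Qed.

Lemma Bd_single lam x : (0 < lam)%R -> Bd lam x 1 x.
Proof.
rewrite /Bd => Hl /=.
have := exp_ineq1_le (INR x / lam - 1).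
have : (INR x = lam * (INR x / lam))%R by field; lra.
nra.
Qed.

Lemma Bd_big lam (I : Type) (r : seq I) (f a s : I -> nat) : (0 < lam)%R ->
  (forall i, Bd lam (f i) (a i) (s i)) ->
  Bd lam (\prod_(i <- r) f i) (\sum_(i <- r) a i) (\sum_(i <- r) s i).
Proof.
move=> Hl H; elim: r => [|i r IH]; first by rewrite !big_nil; exact: Bd_one.
rewrite !big_cons; exact: Bd_mul.
Qed.

Lemma stirling m : (INR m ^ m <= exp (INR m) * INR (m`!))%R.
Proof.
elim: m => [|m IH]; first by rewrite /= exp_0; lra.
have He : (1 <= exp 1)%R by have := exp_ineq1_le 1; lra.
have Hm : (INR m.+1 ^ m <= exp 1 * INR m ^ m)%R.
  case: m IH => [|m] IH; first by rewrite /=; lra.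
  have Hpos : (0 < INR m.+1)%R by apply: lt_0_INR; apply/ltP.
  have -> : (INR m.+2 = INR m.+1 * (1 + / INR m.+1))%R.
    rewrite (S_INR m.+1); field; lra.
  rewrite Rpow_mult_distr Rmult_comm; apply: Rmult_le_compat_r; first by apply: pow_le; lra.
  have -> : (exp 1 = exp (/ INR m.+1) ^ m.+1)%R.
    rewrite pow_exp; congr exp; field; lra.
  apply: pow_incr; split; first by have := Rinv_0_lt_compat _ Hpos; lra.
  exact: exp_ineq1_le.
rewrite factS mult_INR -tech_pow_Rmult.
have H0 : (0 <= INR m.+1)%R by exact: pos_INR.
have H1 : (INR m.+1 ^ m <= exp 1 * (exp (INR m) * INR m`!))%R.
  apply: (Rle_trans _ _ _ Hm); apply: Rmult_le_compat_l => //; lra.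
have -> : (exp (INR m.+1) = exp (INR m) * exp 1)%R by rewrite S_INR exp_plus.
have := Rmult_le_compat_l _ _ _ H0 H1.
move=> H2; apply: (Rle_trans _ _ _ H2); right; ring.
Qed.

Lemma final_real (k n C P : nat) : 1 <= k -> 1 <= n -> n`! <= P ->
  Bd (exp (ln (INR n) / INR k - 1)) P (k * n) (2 * (C + k * n)) ->
  (INR k / (2 * exp 1) * Rpower (INR n) (1 + / INR k) - INR k * INR n <= INR C)%R.
Proof.
move=> Hk Hn HP HB.
set lam := exp (ln (INR n) / INR k - 1).
have Hkr : (1 <= INR k)%R by apply: (le_INR 1); apply/leP.
have Hnr : (1 <= INR n)%R by apply: (le_INR 1); apply/leP.
have Hl : (0 < lam)%R by apply: exp_pos.
have H1 : (INR (n`!) <= INR P)%R by apply: le_INR; apply/leP.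
have Hs := stirling n.
move: HB; rewrite /Bd -!multE -!plusE !mult_INR !plus_INR !mult_INR => HB.
have Hlam : (lam ^ (k * n) = exp (INR n * ln (INR n) - INR k * INR n))%R.
  rewrite /lam pow_exp mult_INR; congr exp; field; lra.
have Hnn : (INR n ^ n = exp (INR n * ln (INR n)))%R.
  by rewrite -{1}(exp_ln (INR n)) ?pow_exp //; lra.
rewrite Hlam Hnn in HB Hs.
set X := (INR 2 * (INR C + INR k * INR n) / lam)%R in HB.
have Hc : (exp (INR n * ln (INR n)) <=
    exp (INR n) * (exp (INR n * ln (INR n) - INR k * INR n) * exp (X - INR k * INR n)))%R.
  apply: (Rle_trans _ _ _ Hs).
  apply: Rmult_le_compat_l; first by apply: Rlt_le; apply: exp_pos.
  exact: (Rle_trans _ _ _ H1 HB).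
rewrite -!exp_plus in Hc.
have Hc2 : (INR n * ln (INR n) <= INR n + (INR n * ln (INR n) - INR k * INR n) + (X - INR k * INR n))%R.
  case: (Rle_lt_dec (INR n * ln (INR n)) (INR n + (INR n * ln (INR n) - INR k * INR n) + (X - INR k * INR n))) => // Hlt.
  have := exp_increasing _ _ Hlt; rewrite -Rplus_assoc in Hc; lra.
have HX : (INR k * INR n <= X)%R by nra.
have HX2 : (INR k * INR n * lam <= INR 2 * (INR C + INR k * INR n))%R.
  have := Rmult_le_compat_r _ _ _ (Rlt_le _ _ Hl) HX.
  rewrite /X; have -> : (INR 2 * (INR C + INR k * INR n) / lam * lam = INR 2 * (INR C + INR k * INR n))%R by field; lra.
  by [].
have HR : (Rpower (INR n) (1 + / INR k) = INR n * exp 1 * lam)%R.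
  rewrite /Rpower /lam Rmult_plus_distr_r Rmult_1_l exp_plus exp_ln; last lra.
  rewrite Rmult_assoc; congr Rmult.
  rewrite -exp_plus; congr exp; field; lra.
rewrite HR.
have He : (0 < exp 1)%R by apply: exp_pos.
have -> : (INR k / (2 * exp 1) * (INR n * exp 1 * lam) = INR k * INR n * lam / 2)%R by field; lra.
simpl (INR 2) in HX2.
lra.
Qed.

Lemma sum_2lin (I : Type) (r : seq I) (g : I -> nat) (c : nat) :
  \sum_(i <- r) (2 * g i + 2 * c) = 2 * (\sum_(i <- r) g i + size r * c).
Proof.
elim: r => [|x r IH]; first by rewrite !big_nil.
rewrite !big_cons IH /=; lia.
Qed.

Theorem theorem6 (k n : nat) (hk : (1 <= k)%N) (hn : (1 <= n)%N)
  (A : algo n) (HA : sorts_in A k) :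
  exists p : {perm 'I_n},
    (INR k / (2 * exp 1) * Rpower (INR n) (1 + / INR k) - INR k * INR n
       <= INR (cost A p k))%R.
Proof.
have [p Hp] := @tree_count {perm 'I_n} (KT n) k (@code n A) (@Fam n A)
  (fun j x y H => @Fam_agree n A j x y H) (fun j x _ => @code_in n A j x) (@code_inj n A k HA) 1%g.
exists p.
rewrite card_Sn in Hp.
set lam := exp (ln (INR n) / INR k - 1).
have Hl : (0 < lam)%R by apply: exp_pos.
set P := \prod_(0 <= l < k) \prod_(i <- enum 'I_n) (2 * dcnt (Qr A p l) i + 2).
have HP : n`! <= P.
  apply: (leq_trans Hp); apply: leq_prod => l _; exact: card_Fam.
have HB := @Bd_big lam _ (index_iota 0 k) (fun l => \prod_(i <- enum 'I_n) (2 * dcnt (Qr A p l) i + 2))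
   (fun l => \sum_(i <- enum 'I_n) 1) (fun l => \sum_(i <- enum 'I_n) (2 * dcnt (Qr A p l) i + 2)) Hl
   (fun l => @Bd_big lam _ (enum 'I_n) _ (fun _ => 1) _ Hl (fun i => Bd_single _ Hl)).
apply: (@final_real k n (cost A p k) P hk hn HP).
have E1 : \sum_(l <- index_iota 0 k) \sum_(i <- enum 'I_n) 1 = k * n.
  rewrite (eq_bigr (fun _ => n)); last by move=> l _; rewrite sum1_size size_enum_ord.
  by rewrite sum_nat_const_nat subn0.
have E2 : \sum_(l <- index_iota 0 k) \sum_(i <- enum 'I_n) (2 * dcnt (Qr A p l) i + 2) = 2 * (cost A p k + k * n).
  rewrite (eq_bigr (fun l => 2 * #|Qr A p l| + 2 * n)); last first.
    move=> l _; rewrite (card_split (Qr A p l)).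
    have := sum_2lin (enum 'I_n) (dcnt (Qr A p l)) 1; rewrite size_enum_ord !muln1 => ->.
    by rewrite mulnDr.
  by rewrite sum_2lin cost_sum size_iota subn0.
by rewrite -E2 -E1.
Qed.
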